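(* For every integer $n\ge2$, $\lambda(\mathbb{Z}/n\mathbb{Z})\le\frac1n\log\rho(n)$, where $\rho(n)$ is the smallest prime number that does not divide $n$.
   Context: For a compact abelian group $G$ with normalized Haar measure $\mu$ and (multiplicative) dual group of characters $\widehat{G}$, let $\mathbb{Z}[\widehat{G}]$ denote the ring of integral linear combinations of characters, regarded as functions on $G$. For $f\in\mathbb{Z}[\widehat{G}]$, the logarithmic Mahler measure over $G$ is $\mathsf{m}_G(f)=\int_G\log|f|\,d\mu$ (with $\log 0=-\infty$). The Lehmer constant of $G$ is $\lambda(G)=\inf\{\mathsf{m}_G(f): f\in\mathbb{Z}[\widehat{G}],\ \mathsf{m}_G(f)>0\}$. Here $\mathbb{Z}/n\mathbb{Z}$ is the finite cyclic group with the uniform probability measure; its characters are $\chi_k(j)=e^{2\pi i jk/n}$, $k=0,\dots,n-1$. *)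

(* Defs.v *)
From Stdlib Require Import Reals ZArith Znumtheory ClassicalEpsilon.
From Coquelicot Require Import Coquelicot.
Open Scope R_scope.

Definition chi (n k j : nat) : C :=
  (cos (2 * PI * INR j * INR k / INR n), sin (2 * PI * INR j * INR k / INR n)).

(* An element f of Z[hat(Z/nZ)], given by integer coefficients c_0,...,c_{n-1}:
   f(j) = sum_{k<n} c_k chi_k(j). *)
Definition feval (n : nat) (c : nat -> Z) (j : nat) : C :=
  sum_n (fun k => Cmult (RtoC (IZR (c k))) (chi n k j)) (pred n).

Definition mahler (n : nat) (c : nat -> Z) : Rbar :=
  if excluded_middle_informative (exists j, (j < n)%nat /\ feval n c j = 0%C)
  then m_infty
  else Finite (/ INR n * sum_n (fun j => ln (Cmod (feval n c j))) (pred n)).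

Definition lehmer_Zn (n : nat) : Rbar :=
  Glb_Rbar (fun x : R => exists c : nat -> Z, mahler n c = Finite x /\ 0 < x).

Definition is_rho (n : nat) (p : Z) : Prop :=
  prime p /\ ~ (p | Z.of_nat n)%Z /\
  forall q : Z, prime q -> ~ (q | Z.of_nat n)%Z -> (p <= q)%Z.

(* Main.v *)
Require Import Defs.
From Stdlib Require Import Reals ZArith Znumtheory List Permutation Lia Lra.
From Coquelicot Require Import Coquelicot.
Open Scope R_scope.

Definition E (t : R) : C := (cos t, sin t).

Lemma E_add a b : (E a * E b)%C = E (a + b).
Proof.
  unfold E, Cmult; simpl. rewrite cos_plus, sin_plus.
  apply injective_projections; simpl; ring.
Qed.

Lemma E_0 : E 0 = RtoC 1.
Proof. unfold E, RtoC. rewrite cos_0, sin_0. reflexivity. Qed.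

Lemma E_per (n m : nat) : (0 < n)%nat ->
  E (2 * PI * INR m / INR n) = E (2 * PI * INR (m mod n) / INR n).
Proof.
  intros Hn.
  assert (Hn' : INR n <> 0) by (apply not_0_INR; lia).
  replace (2 * PI * INR m / INR n) with
    (2 * PI * INR (m mod n) / INR n + 2 * INR (m / n) * PI).
  - unfold E. rewrite cos_period, sin_period. reflexivity.
  - rewrite (Nat.div_mod_eq m n) at 3. rewrite plus_INR, mult_INR. field. auto.
Qed.

Lemma E_cong (n a b : nat) : (0 < n)%nat -> (a mod n = b mod n)%nat ->
  E (2 * PI * INR a / INR n) = E (2 * PI * INR b / INR n).
Proof. intros Hn H. rewrite (E_per n a), (E_per n b), H by auto. reflexivity. Qed.
Lemma E_ne1 (n r : nat) : (0 < r < n)%nat -> E (2 * PI * INR r / INR n) <> RtoC 1.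
Proof.
  intros Hr Heq.
  assert (Hn : 0 < INR n) by (apply lt_0_INR; lia).
  assert (Hrn : 0 < INR r < INR n) by (split; [apply lt_0_INR | apply lt_INR]; lia).
  set (t := 2 * PI * INR r / INR n).
  assert (Ht0 : 0 < t). { unfold t. apply Rdiv_lt_0_compat; [|lra].
    assert (0 < PI) by exact PI_RGT_0. nra. }
  assert (Ht1 : t < 2 * PI). { unfold t. apply Rmult_lt_reg_r with (INR n); auto.
    field_simplify; [|lra]. assert (0 < PI) by exact PI_RGT_0. nra. }
  unfold E, RtoC in Heq. injection Heq. intros Hs Hc. fold t in Hs, Hc.
  destruct (sin_eq_O_2PI_0 t) as [H|[H|H]]; try lra.
  rewrite H in Hc. rewrite cos_PI in Hc. lra.
Qed.

Fixpoint Gs (th : R) (m : nat) : C :=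
  match m with O => RtoC 0 | S m' => (Gs th m' + E (INR m' * th))%C end.

Lemma Gs_geo th m : (Gs th m * (E th - 1))%C = (E (INR m * th) - 1)%C.
Proof.
  induction m as [|m IH].
  - simpl. replace (0 * th) with 0 by ring. rewrite E_0. ring.
  - simpl Gs. replace ((Gs th m + E (INR m * th)) * (E th - 1))%C with
      ((Gs th m * (E th - 1)) + E (INR m * th) * E th - E (INR m * th))%C by ring.
    rewrite IH, E_add. rewrite S_INR. replace ((INR m + 1) * th) with (INR m * th + th) by ring.
    ring.
Qed.

Lemma Gs_0 m : Gs 0 m = RtoC (INR m).
Proof.
  induction m as [|m IH]; simpl Gs. reflexivity.
  rewrite IH. replace (INR m * 0) with 0 by ring. rewrite E_0, S_INR, RtoC_plus. reflexivity.
Qed.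
Fixpoint cnt (n m k : nat) : nat :=
  match m with O => O | S m' => (cnt n m' k + (if Nat.eqb (m' mod n) k then 1 else 0))%nat end.

Lemma ind_sum (v : nat -> C) r N :
  sum_n (fun k => (RtoC (INR (if Nat.eqb r k then 1 else 0)) * v k)%C) N
  = if Nat.leb r N then v r else RtoC 0.
Proof.
  induction N as [|N IH].
  - rewrite sum_O. destruct r; simpl; ring.
  - rewrite sum_Sn, IH. unfold plus; simpl.
    destruct (Nat.leb r N) eqn:H1.
    + apply Nat.leb_le in H1.
      assert (Nat.leb r (S N) = true) by (apply Nat.leb_le; lia). rewrite H.
      assert (Nat.eqb r (S N) = false) by (apply Nat.eqb_neq; lia). rewrite H0. simpl. ring.
    + apply Nat.leb_gt in H1. destruct (Nat.eq_dec r (S N)) as [->|Hne].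
      * rewrite Nat.eqb_refl, Nat.leb_refl. simpl. ring.
      * assert (Nat.eqb r (S N) = false) by (apply Nat.eqb_neq; lia). rewrite H.
        assert (Nat.leb r (S N) = false) by (apply Nat.leb_gt; lia). rewrite H0. simpl. ring.
Qed.

Lemma chi_E n k j : chi n k j = E (2 * PI * INR (j * k) / INR n).
Proof. unfold chi, E. rewrite mult_INR. repeat rewrite Rmult_assoc. reflexivity. Qed.

Lemma feval_expand n j m : (0 < n)%nat ->
  sum_n (fun k => (RtoC (INR (cnt n m k)) * chi n k j)%C) (pred n)
  = Gs (2 * PI * INR j / INR n) m.
Proof.
  intros Hn. assert (Hn' : INR n <> 0) by (apply not_0_INR; lia).
  induction m as [|m IH].
  - simpl. transitivity (@sum_n C_AbelianMonoid (fun k : nat => RtoC 0) (pred n)).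
    + apply sum_n_ext. intros k. simpl. ring.
    + generalize (pred n). intros N. induction N as [|N IHN].
      * rewrite sum_O. reflexivity.
      * rewrite sum_Sn, IHN. unfold plus; simpl. ring.
  - simpl cnt. simpl Gs. rewrite <- IH.
    transitivity (sum_n (fun k => plus ((RtoC (INR (cnt n m k)) * chi n k j)%C)
        ((RtoC (INR (if Nat.eqb (m mod n) k then 1 else 0)) * chi n k j)%C)) (pred n)).
    + apply sum_n_ext. intros k. unfold plus; simpl. rewrite plus_INR. rewrite RtoC_plus. ring.
    + rewrite sum_n_plus, ind_sum. unfold plus; simpl.
      assert (Nat.leb (m mod n) (pred n) = true).
      { apply Nat.leb_le. pose proof (Nat.mod_upper_bound m n). lia. }
      rewrite H. f_equal. rewrite chi_E. rewrite (E_cong n _ (j * m)); auto.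
      * f_equal. rewrite mult_INR. field. auto.
      * rewrite Nat.mul_mod_idemp_r; lia.
Qed.
Lemma sigma_inj (n P j1 j2 : nat) : prime (Z.of_nat P) -> ~ (Z.of_nat P | Z.of_nat n)%Z ->
  (j1 < n)%nat -> (j2 < n)%nat -> ((j1 * P) mod n = (j2 * P) mod n)%nat -> j1 = j2.
Proof.
  intros Hp Hnd H1 H2 Heq.
  assert (Hrp : rel_prime (Z.of_nat n) (Z.of_nat P)).
  { apply rel_prime_sym. apply prime_rel_prime; auto. }
  pose proof (Nat.div_mod_eq (j1 * P) n) as E1.
  pose proof (Nat.div_mod_eq (j2 * P) n) as E2.
  set (q1 := (j1 * P / n)%nat) in *. set (q2 := (j2 * P / n)%nat) in *.
  rewrite Heq in E1. clearbody q1 q2. revert E1 E2. generalize ((j2 * P) mod n)%nat. intros r0 E1 E2.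
  apply (f_equal Z.of_nat) in E1. apply (f_equal Z.of_nat) in E2.
  rewrite Nat2Z.inj_add, !Nat2Z.inj_mul in E1, E2.
  assert (Hd : (Z.of_nat n | Z.of_nat P * (Z.of_nat j1 - Z.of_nat j2))%Z).
  { exists (Z.of_nat q1 - Z.of_nat q2)%Z. rewrite (Z.mul_comm (Z.of_nat P) (Z.of_nat j1 - Z.of_nat j2)), Z.mul_sub_distr_r, E1, E2. ring. }
  apply Gauss in Hd; auto. destruct Hd as [k Hk]. apply Nat2Z.inj. destruct (Z.lt_trichotomy k 0) as [Hk0|[Hk0|Hk0]]; [nia|subst; lia|nia].
Qed.

Fixpoint Sl (g : nat -> R) (l : list nat) : R :=
  match l with nil => 0 | x :: t => g x + Sl g t end.

Lemma Sl_app g l1 l2 : Sl g (l1 ++ l2) = Sl g l1 + Sl g l2.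
Proof. induction l1; simpl; [ring| rewrite IHl1; ring]. Qed.

Lemma Sl_perm g l l' : Permutation l l' -> Sl g l = Sl g l'.
Proof. intros H; induction H; simpl; lra. Qed.

Lemma Sl_map g f l : Sl g (map f l) = Sl (fun x => g (f x)) l.
Proof. induction l; simpl; [ring| rewrite IHl; ring]. Qed.

Lemma Sl_lin a b c l : Sl (fun x => a x - b x + c x) l = Sl a l - Sl b l + Sl c l.
Proof. induction l; simpl; [ring| rewrite IHl; ring]. Qed.

Lemma sum_n_Sl (g : nat -> R) N : sum_n g N = Sl g (seq 0 (S N)).
Proof.
  induction N as [|N IH].
  - rewrite sum_O. simpl. ring.
  - rewrite sum_Sn, IH, (seq_S (S N)), Sl_app. simpl. unfold plus; simpl. ring.
Qed.

Lemma Sl_ind_zero (v : R) N s : Sl (fun j => if Nat.eqb j 0 then v else 0) (seq (S s) N) = 0.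
Proof. revert s; induction N; intros s; simpl; [ring|]. rewrite IHN. ring. Qed.

Definition Lf (n m : nat) : R := ln (Cmod (E (2 * PI * INR m / INR n) - 1)%C).

Lemma sub1_ne0 (z : C) : z <> RtoC 1 -> (z - 1)%C <> RtoC 0.
Proof. intros H H0. apply H. replace z with ((z - 1) + 1)%C by ring. rewrite H0. ring. Qed.

Lemma value (n P j : nat) : (2 <= n)%nat -> prime (Z.of_nat P) -> ~ (Z.of_nat P | Z.of_nat n)%Z ->
  (j < n)%nat ->
  Gs (2 * PI * INR j / INR n) P <> RtoC 0 /\
  ln (Cmod (Gs (2 * PI * INR j / INR n) P)) =
    Lf n ((j * P) mod n) - Lf n j + (if Nat.eqb j 0 then ln (INR P) else 0).
Proof.
  intros Hn Hp Hnd Hj.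
  assert (HP2 := prime_ge_2 _ Hp).
  assert (HPr : 1 < INR P). { rewrite INR_IZR_INZ. apply IZR_lt. lia. }
  assert (Hn' : INR n <> 0) by (apply not_0_INR; lia).
  destruct (Nat.eq_dec j 0) as [->|Hj0].
  - replace (2 * PI * INR 0 / INR n) with 0 by (simpl; field; auto).
    rewrite Gs_0. simpl Nat.eqb. rewrite Nat.mul_0_l, Nat.mod_0_l by lia.
    split.
    + intros H. injection H. lra.
    + rewrite Cmod_R, Rabs_pos_eq by lra. ring.
  - set (r := ((j * P) mod n)%nat).
    assert (Hr : (0 < r < n)%nat).
    { split.
      - destruct (Nat.eq_dec r 0) as [H0|H0]; [|lia].
        exfalso. apply Hj0. apply (sigma_inj n P j 0); auto; try lia.
        fold r. rewrite H0, Nat.mul_0_l, Nat.mod_0_l; lia.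
      - apply Nat.mod_upper_bound; lia. }
    set (th := 2 * PI * INR j / INR n).
    pose proof (Gs_geo th P) as G.
    assert (EP : E (INR P * th) = E (2 * PI * INR r / INR n)).
    { unfold r. rewrite <- E_per by lia. f_equal. unfold th. rewrite mult_INR. field. auto. }
    rewrite EP in G.
    assert (NA := sub1_ne0 _ (E_ne1 n r Hr)).
    assert (NB := sub1_ne0 _ (E_ne1 n j ltac:(lia))). fold th in NB.
    assert (NG : Gs th P <> RtoC 0).
    { intros H. rewrite H in G. apply NA. rewrite <- G. ring. }
    split; auto.
    assert (Hj0' : Nat.eqb j 0 = false) by (apply Nat.eqb_neq; auto). rewrite Hj0'.
    unfold Lf. fold th. fold r.
    apply (f_equal Cmod) in G. rewrite Cmod_mult in G.
    apply Cmod_gt_0 in NA. apply Cmod_gt_0 in NB. apply Cmod_gt_0 in NG.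
    rewrite <- G. rewrite ln_mult by auto. ring.
Qed.
Theorem theorem4p6 (n : nat) (p : Z) :
  (2 <= n)%nat -> is_rho n p ->
  Rbar_le (lehmer_Zn n) (Finite (/ INR n * ln (IZR p))).
Proof.
  intros Hn [Hp [Hnd _]].
  assert (Hp2 := prime_ge_2 p Hp).
  assert (HpP : p = Z.of_nat (Z.to_nat p)) by (rewrite Z2Nat.id; lia).
  set (P := Z.to_nat p) in *. clearbody P. subst p.
  rewrite <- INR_IZR_INZ.
  assert (HPr : 1 < INR P). { rewrite INR_IZR_INZ. apply IZR_lt. lia. }
  assert (Hn0 : 0 < INR n) by (apply lt_0_INR; lia).
  set (c := fun k => Z.of_nat (cnt n P k)).
  assert (Hf : forall j, feval n c j = Gs (2 * PI * INR j / INR n) P).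
  { intros j. unfold feval, c. rewrite <- feval_expand by lia.
    apply sum_n_ext. intros k. rewrite <- INR_IZR_INZ. reflexivity. }
  unfold lehmer_Zn.
  destruct (Glb_Rbar_correct (fun x : R => exists c : nat -> Z, mahler n c = Finite x /\ 0 < x))
    as [Hlb _].
  apply Hlb. exists c. split.
  2: { apply Rmult_lt_0_compat. apply Rinv_0_lt_compat; auto. rewrite <- ln_1. apply ln_increasing; lra. }
  unfold mahler.
  match goal with |- context [if ?x then _ else _] => destruct x as [[j [Hj Hz]]|_] end.
  { exfalso. rewrite Hf in Hz. destruct (value n P j Hn Hp Hnd Hj) as [H _]. auto. }
  f_equal. f_equal.
  rewrite (sum_n_ext_loc _ (fun j => Lf n ((j * P) mod n) - Lf n j
                                    + (if Nat.eqb j 0 then ln (INR P) else 0))).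
  2: { intros j Hj. rewrite Hf. apply (value n P j Hn Hp Hnd). lia. }
  rewrite sum_n_Sl. replace (S (pred n)) with n by lia.
  rewrite Sl_lin.
  assert (Hperm : Permutation (map (fun j => ((j * P) mod n)%nat) (seq 0 n)) (seq 0 n)).
  { apply Permutation_map_same_l.
    - apply FinFun.Injective_map_NoDup_in; [|apply seq_NoDup].
      intros x y Hx Hy. apply in_seq in Hx, Hy. apply (sigma_inj n P); auto; lia.
    - intros x Hx. apply in_map_iff in Hx. destruct Hx as [y [<- Hy]].
      apply in_seq. pose proof (Nat.mod_upper_bound (y * P) n). lia. }
  rewrite <- (Sl_map (Lf n) (fun j => ((j * P) mod n)%nat)).
  rewrite (Sl_perm _ _ _ Hperm).
  destruct n as [|n']; [lia|].
  assert (Hind : Sl (fun j => if Nat.eqb j 0 then ln (INR P) else 0) (seq 0 (S n')) = ln (INR P)).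
  { simpl. rewrite Sl_ind_zero. ring. }
  rewrite Hind. lra.
Qed.
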